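(* Let $S\in\mathbb{S}^d_m$ and $G\in\mathcal{M}(S)$. If $x\in G$ and $y\in Q_G(x)$, then $P_G(x)\subset P_G(y)$.
   Context: $\mathbb{S}^d_m$: symmetric invertible $d\times d$ real matrices with exactly $m$ positive eigenvalues; $S(x,y):=\langle x,Sy\rangle$. $G\subset\mathbb{R}^d$ is $S$-monotone if $S(x-y,x-y)\ge0$ for $x,y\in G$; maximal if not a strict subset of another $S$-monotone set; $\mathcal{M}(S)$ is the family of maximal $S$-monotone sets. $\psi_G(y):=\sup_{x\in G}(S(x,y)-\frac12S(x,x))$ and $P_G(y):=\operatorname{argmax}_{x\in G}(S(x,y)-\frac12S(x,x))$. $P_G^{-1}(x):=\{y:x\in P_G(y)\}$. For $x\in G$, $Q_G(x)$ is the largest closed convex subset of $P_G^{-1}(x)$ whose relative interior contains $x$; equivalently, $y\in Q_G(x)$ iff there exist $z\in P_G^{-1}(x)$ and $t\in(0,1)$ with $x=ty+(1-t)z$. *)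

(* Defs.v *)
From HB Require Import structures.
From mathcomp Require Import all_boot all_order all_algebra.
From mathcomp Require Import boolp classical_sets reals.
Set Implicit Arguments. Unset Strict Implicit. Unset Printing Implicit Defensive.
Import Order.TTheory GRing.Theory Num.Theory.
Local Open Scope ring_scope.
Local Open Scope classical_set_scope.

Section Defs.
Variables (R : realType) (d : nat).

Definition Sform (S : 'M[R]_d) (x y : 'cV[R]_d) : R := (x^T *m S *m y) 0 0.

(* S \in S^d_m : symmetric, invertible, exactly m positive eigenvalues
   (counted with multiplicity: the characteristic polynomial splits over R
   as prod (X - a) over a sequence s of eigenvalues with m positive entries). *)
Definition in_Sdm (m : nat) (S : 'M[R]_d) : Prop :=
  S^T = S /\ S \in unitmx /\
  exists s : seq R,
    char_poly S = \prod_(a <- s) ('X - a%:P) /\ count (fun a => 0 < a) s = m.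

Definition S_monotone (S : 'M[R]_d) (G : set 'cV[R]_d) : Prop :=
  forall x y, G x -> G y -> 0 <= Sform S (x - y) (x - y).

Definition maximal_S_monotone (S : 'M[R]_d) (G : set 'cV[R]_d) : Prop :=
  S_monotone S G /\
  forall G' : set 'cV[R]_d, S_monotone S G' -> G `<=` G' -> G' = G.

Definition phiS (S : 'M[R]_d) (x y : 'cV[R]_d) : R :=
  Sform S x y - 2^-1 * Sform S x x.

Definition P_G (S : 'M[R]_d) (G : set 'cV[R]_d) (y : 'cV[R]_d) : set 'cV[R]_d :=
  [set x | G x /\ forall x', G x' -> phiS S x' y <= phiS S x y].

Definition P_G_inv (S : 'M[R]_d) (G : set 'cV[R]_d) (x : 'cV[R]_d) : set 'cV[R]_d :=
  [set y | P_G S G y x].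

Definition Q_G (S : 'M[R]_d) (G : set 'cV[R]_d) (x : 'cV[R]_d) : set 'cV[R]_d :=
  [set y | P_G_inv S G x y /\
     exists z t, P_G_inv S G x z /\ 0 < t < 1 /\ x = t *: y + (1 - t) *: z].

End Defs.

(* Main.v *)
Require Import Defs.
From HB Require Import structures.
From mathcomp Require Import all_boot all_order all_algebra.
From mathcomp Require Import boolp classical_sets reals.
From mathcomp Require Import lra.
Import Order.TTheory GRing.Theory Num.Theory.
Local Open Scope ring_scope.
Local Open Scope classical_set_scope.

Lemma Sform_lin (R : realType) (d : nat) (S : 'M[R]_d) (u v w : 'cV[R]_d) (a b : R) :
  Sform S u (a *: v + b *: w) = a * Sform S u v + b * Sform S u w.
Proof.
by rewrite /Sform mulmxDr -!scalemxAr !mxE.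
Qed.

Theorem lemma2 (R : realType) (d m : nat) (S : 'M[R]_d) (G : set 'cV[R]_d)
  (x y : 'cV[R]_d) :
  in_Sdm m S -> maximal_S_monotone S G ->
  G x -> Q_G S G x y ->
  P_G S G x `<=` P_G S G y.
Proof.
move=> _ _ Gx [[_ Hy] [z [t [[_ Hz] [/andP [t0 t1] ex]]]]] w [Gw Hw].
split => // x' Gx'.
have h1 := Hw x Gx.
have h3 := Hy w Gw.
have h4 := Hz w Gw.
have h5 := Hy x' Gx'.
have hx : forall u, Sform S u x = t * Sform S u y + (1 - t) * Sform S u z.
  by move=> u; rewrite {1}ex Sform_lin.
move: h1; rewrite /phiS => h1.
have e1 := hx x. have e2 := hx w.
move: h3 h4 h5; rewrite /phiS => h3 h4 h5.
have key : t * ((Sform S w y - 2^-1 * Sform S w w) - (Sform S x y - 2^-1 * Sform S x x)) >= 0 by nra.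
have : 0 <= (Sform S w y - 2^-1 * Sform S w w) - (Sform S x y - 2^-1 * Sform S x x).
  by rewrite -(pmulr_rge0 _ t0).
lra.
Qed.
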